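(* Consider the integer quadratic program: minimize $x^TQx$ subject to $Ax\le b$, $Cx=d$, $x\in\mathbb{Z}^n$. For any deep optimal solution $x^\star$ of this program and any $y_i\in Y$ such that $y_i^TQ$ is linearly dependent on the rows of $C$ (i.e., lies in their linear span), the vectors $x^\star+y_i$ and $x^\star-y_i$ are also optimal solutions.
   Context: Setting: $Q$ is an $n\times n$ integer symmetric matrix, $A$ an $m\times n$ integer matrix, $b\in\mathbb{Z}^m$, $C$ an integer matrix with $n$ columns and linearly independent rows, and $d$ an integer vector. $\Delta$ is the maximum absolute value of the determinant of a square submatrix of $C$. $y_1,\dots,y_r$ is a basis of the nullspace of $C$ consisting of integer vectors with $|y_i|_\infty\le\Delta^2$, and $Y$ is the set of these vectors. A feasible solution is an $x\in\mathbb{Z}^n$ with $Ax\le b$ and $Cx=d$; an optimal solution is a feasible solution minimizing $x^TQx$ over all feasible solutions. A feasible solution $x$ is deep if $x+y_i$ and $x-y_i$ are feasible for all $y_i\in Y$. *)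

(* Defs.v *)
From mathcomp Require Import all_boot all_order all_algebra.
Set Implicit Arguments. Unset Strict Implicit. Unset Printing Implicit Defensive.
Import Order.TTheory GRing.Theory Num.Theory.
Local Open Scope ring_scope.

Definition ratmx (p q : nat) (M : 'M[int]_(p, q)) : 'M[rat]_(p, q) :=
  map_mx (fun z : int => z%:~R) M.

(* Delta: maximum absolute value of the determinant of a square submatrix of C
   (rows f, columns g; repeated or permuted indices only give 0 or a sign change,
    so this is the max over genuine square submatrices, including the empty one). *)
Definition maxsubdet (k n : nat) (C : 'M[int]_(k, n)) : nat :=
  \max_(p < (minn k n).+1)
    \max_(f : {ffun 'I_p -> 'I_k})
      \max_(g : {ffun 'I_p -> 'I_n}) `|\det (mxsub f g C)|%N.

Definition feasible (m n k : nat) (A : 'M[int]_(m, n)) (b : 'cV[int]_m)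
    (C : 'M[int]_(k, n)) (d : 'cV[int]_k) (x : 'cV[int]_n) : Prop :=
  (forall i, (A *m x) i 0 <= b i 0) /\ C *m x = d.

Definition qobj (n : nat) (Q : 'M[int]_n) (x : 'cV[int]_n) : int :=
  (x^T *m Q *m x) 0 0.

Definition optimal (m n k : nat) (Q : 'M[int]_n) (A : 'M[int]_(m, n)) (b : 'cV[int]_m)
    (C : 'M[int]_(k, n)) (d : 'cV[int]_k) (x : 'cV[int]_n) : Prop :=
  feasible A b C d x /\
  forall z, feasible A b C d z -> qobj Q x <= qobj Q z.

Definition deep (m n k r : nat) (A : 'M[int]_(m, n)) (b : 'cV[int]_m)
    (C : 'M[int]_(k, n)) (d : 'cV[int]_k) (Y : 'M[int]_(n, r)) (x : 'cV[int]_n) : Prop :=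
  feasible A b C d x /\
  forall i : 'I_r, feasible A b C d (x + col i Y) /\ feasible A b C d (x - col i Y).

Definition nullspace_basis (n k r : nat) (C : 'M[int]_(k, n)) (Y : 'M[int]_(n, r)) : Prop :=
  row_free (ratmx Y)^T /\
  forall v : 'rV[rat]_n, (ratmx C *m v^T == 0) = (v <= (ratmx Y)^T)%MS.

(* Main.v *)
Require Import Defs.
From mathcomp Require Import all_boot all_order all_algebra.
From mathcomp Require Import lra ring.
Import Order.TTheory GRing.Theory Num.Theory.
Local Open Scope ring_scope.

Lemma ratmxM p q s (M : 'M[int]_(p, q)) (N : 'M[int]_(q, s)) :
  ratmx (M *m N) = ratmx M *m ratmx N.
Proof. exact: map_mxM. Qed.

Lemma qobj_shift n (Q : 'M[int]_n) (x y : 'cV[int]_n) (s : int) :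
  Q^T = Q ->
  qobj Q (x + s *: y) = qobj Q x + 2 * s * (y^T *m Q *m x) 0 0
                         + s * s * (y^T *m Q *m y) 0 0.
Proof.
move=> QT; rewrite /qobj [(x + _)^T]linearD /= [(_ *: y)^T]linearZ /= !mulmxDl !mulmxDr.
have -> : x^T *m Q *m (s *: y) = s *: (y^T *m Q *m x)^T.
  by rewrite -scalemxAr !trmx_mul trmxK QT mulmxA.
rewrite -!scalemxAl -!scalemxAr !mxE /=; ring.
Qed.

Theorem lemma4 (m n k r : nat) (Q : 'M[int]_n) (A : 'M[int]_(m, n)) (b : 'cV[int]_m)
    (C : 'M[int]_(k, n)) (d : 'cV[int]_k) (Y : 'M[int]_(n, r)) :
  Q^T = Q ->
  row_free (ratmx C) ->
  nullspace_basis C Y ->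
  (forall (i : 'I_n) (j : 'I_r), (`|Y i j| <= (maxsubdet C ^ 2)%N)%N) ->
  forall xs : 'cV[int]_n,
  optimal Q A b C d xs -> deep A b C d Y xs ->
  forall i : 'I_r,
  ((ratmx ((col i Y)^T *m Q)) <= ratmx C)%MS ->
  optimal Q A b C d (xs + col i Y) /\ optimal Q A b C d (xs - col i Y).
Proof.
move=> QT _ [_ hN] _ xs [fx opt] [_ hd] i /submxP [w hw].
set y := col i Y.
have Cy : ratmx C *m (ratmx y) = 0.
  apply/eqP; have := hN (ratmx y)^T; rewrite trmxK => ->.
  by rewrite /y /ratmx map_col tr_col row_sub.
have c0 : (y^T *m Q *m y) 0 0 = 0.
  have : ((y^T *m Q *m y) 0 0)%:~R = 0 :> rat.
    have -> : ((y^T *m Q *m y) 0 0)%:~R = (ratmx (y^T *m Q *m y)) 0 0 :> rat.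
      by rewrite /ratmx [in RHS]mxE.
    by rewrite ratmxM hw -mulmxA Cy mulmx0 mxE.
  by move/eqP; rewrite intr_eq0 => /eqP.
set a := (y^T *m Q *m xs) 0 0.
have hp : qobj Q (xs + y) = qobj Q xs + 2 * a.
  by rewrite -[y]scale1r qobj_shift // c0 /a; lra.
have hm : qobj Q (xs - y) = qobj Q xs - 2 * a.
  by rewrite -scaleN1r qobj_shift // c0 /a; lra.
have [f1 f2] := hd i.
have h1 := opt _ f1; have h2 := opt _ f2.
rewrite hp in h1; rewrite hm in h2.
have a0 : a = 0 by lra.
rewrite a0 mulr0 ?addr0 ?subr0 in hp hm.
split; split=> // z fz; by rewrite ?hp ?hm; apply: opt.
Qed.
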